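(* Let the perturbation parameters $\delta_i^j\ge0$ satisfy $0<\delta^1\le\delta^2\le\dots\le\delta^S$, where $\delta^j:=\sum_{i=1}^C\delta_i^j$. Let $t\mapsto\zeta(t)=(\xi(t),\eta(t))$, $t\in I$, be a solution of $(\mathrm P_\delta)$ such that for all $t\in I$: $\epsilon(t)\neq0$; $n^j(t)\neq0$ and $V^j(t)>0$ for $j=1,\dots,S$; $L^j(t)>0$ and $f_{\mathrm{holdup}}'(L^j(t))\neq0$ for $j=1,\dots,S-1$; and $\partial_Tf_{\mathrm{hl}}(T^j(t),\mathbf x^j(t))\neq0$ for $j=1,\dots,S$. Then the Jacobian $D_\eta g_\delta(\zeta(t))$ is non-singular for every $t\in I$. Moreover, along the solution, $\sum_{i=1}^Cy_i^j=1+\delta^j-\frac{1}{V^j}\Big(\sum_{k=1}^{j}L^k\delta^k-\sum_{k=1}^{j-1}V^k(\delta^k-\delta^{k+1})\Big)$ for $j=1,\dots,S-1$, and $\sum_{i=1}^Cy_i^S=1+\delta^S-\frac{1}{\epsilon V^S}\Big(\sum_{k=1}^{S-1}L^k\delta^k-\sum_{k=1}^{S-1}V^k(\delta^k-\delta^{k+1})\Big)$.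
   Context: Fix integers $S\ge 2$, $C\ge 2$ and an interval $I\subset\mathbb R$. Given are continuously differentiable real functions $f_{\mathrm{vle},i}(P,T,\mathbf x)$ ($i=1,\dots,C$), $f_{\mathrm{hl}}(T,\mathbf x)$, $f_{\mathrm{hv}}(T,\mathbf y)$, $f_{\mathrm{holdup}}(L)$. Controls are continuously differentiable real functions $\epsilon,P,Q,T^{\mathrm{cond}}$ on $I$. State variables: $n^j,H^j,T^j,V^j$, $\mathbf x^j,\mathbf y^j\in\mathbb R^C$ ($j=1,\dots,S$), $L^j$ ($j=1,\dots,S-1$); a solution is a tuple of continuously differentiable state functions satisfying all equations at every $t\in I$. ''$2\le j\le S-1$'' marks middle-stage equations. For parameters $\delta_i^j\ge0$, the system $(\mathrm P_\delta)$ consists of: (TM) $\dot n^1=L^1-V^1$; $\dot n^j=L^j-V^j-L^{j-1}+V^{j-1}$ ($2\le j\le S-1$); $\dot n^S=-\epsilon V^S-L^{S-1}+V^{S-1}$; (CM$_\delta$) for $i=1,\dots,C-1$: $\dot x_i^1=\big(L^1(x_i^2-x_i^1-\delta_i^1)-V^1(y_i^1-x_i^1-\delta_i^1)\big)/n^1$; $\dot x_i^j=\big(L^j(x_i^{j+1}-x_i^j-\delta_i^j)-V^j(y_i^j-x_i^j-\delta_i^j)+V^{j-1}(y_i^{j-1}-x_i^j-\delta_i^j)\big)/n^j$ ($2\le j\le S-1$); $\dot x_i^S=\big(\epsilon V^S(x_i^S+\delta_i^S-y_i^S)+V^{S-1}(y_i^{S-1}-x_i^S-\delta_i^S)\big)/n^S$;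 (EB) $\dot H^1=L^1f_{\mathrm{hl}}(T^2,\mathbf x^2)-V^1f_{\mathrm{hv}}(T^1,\mathbf y^1)+Q$; $\dot H^j=L^jf_{\mathrm{hl}}(T^{j+1},\mathbf x^{j+1})-V^jf_{\mathrm{hv}}(T^j,\mathbf y^j)-L^{j-1}f_{\mathrm{hl}}(T^j,\mathbf x^j)+V^{j-1}f_{\mathrm{hv}}(T^{j-1},\mathbf y^{j-1})$ ($2\le j\le S-1$); $\dot H^S=(1-\epsilon)V^Sf_{\mathrm{hl}}(T^{\mathrm{cond}},\mathbf y^S)-V^Sf_{\mathrm{hv}}(T^S,\mathbf y^S)-L^{S-1}f_{\mathrm{hl}}(T^S,\mathbf x^S)+V^{S-1}f_{\mathrm{hv}}(T^{S-1},\mathbf y^{S-1})$; and the algebraic equations $g_\delta=0$, where $\mathrm{aux}^1_\delta=\sum_{i=1}^C\big(L^1(x_i^2-x_i^1-\delta_i^1)-V^1(y_i^1-x_i^1-\delta_i^1)\big)/n^1$; for $2\le j\le S-1$, $\mathrm{aux}^j_\delta=\sum_{i=1}^C\big(L^j(x_i^{j+1}-x_i^j-\delta_i^j)-V^j(y_i^j-x_i^j-\delta_i^j)+V^{j-1}(y_i^{j-1}-x_i^j-\delta_i^j)\big)/n^j$; $\mathrm{aux}^S_\delta=\sum_{i=1}^C\big(\epsilon V^S(x_i^S+\delta_i^S-y_i^S)+V^{S-1}(y_i^{S-1}-x_i^S-\delta_i^S)\big)/n^S$; $\mathrm{ydef}_i^j=y_i^j-f_{\mathrm{vle},i}(P,T^j,\mathbf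 x^j)$; $\mathrm{edef}^j=H^j-n^jf_{\mathrm{hl}}(T^j,\mathbf x^j)$; $\mathrm{xsum}^j=x_C^j-1+\sum_{i=1}^{C-1}x_i^j$; $\mathrm{hold}^j=n^j-f_{\mathrm{holdup}}(L^{j-1})$ ($j=2,\dots,S$); collected as $g_\delta=(\mathrm{aux}^S_\delta,\dots,\mathrm{aux}^1_\delta,\mathbf{ydef}^1,\dots,\mathbf{ydef}^S,\mathrm{edef}^1,\dots,\mathrm{edef}^S,\mathrm{xsum}^1,\dots,\mathrm{xsum}^S,\mathrm{hold}^2,\dots,\mathrm{hold}^S)$ with $\mathbf{ydef}^j=(\mathrm{ydef}^j_1,\dots,\mathrm{ydef}^j_C)$. Differential variables $\xi=(n^1,\dots,n^S,\hat{\mathbf x}^1,\dots,\hat{\mathbf x}^S,H^1,\dots,H^S)$, $\hat{\mathbf x}^j=(x_1^j,\dots,x_{C-1}^j)$; algebraic variables $\eta=(V^S,\dots,V^1,\mathbf y^1,\dots,\mathbf y^S,T^1,\dots,T^S,x_C^1,\dots,x_C^S,L^1,\dots,L^{S-1})$. $D_\eta g_\delta$ is the Jacobian of $g_\delta$ with respect to $\eta$ (with $\xi$ and the controls held fixed). *)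

(* Defs.v *)
From HB Require Import structures.
From mathcomp Require Import all_boot all_order all_algebra.
From mathcomp Require Import all_classical all_reals all_analysis.
Set Implicit Arguments. Unset Strict Implicit. Unset Printing Implicit Defensive.
Import Order.TTheory GRing.Theory Num.Theory.
Import numFieldNormedType.Exports.
Local Open Scope ring_scope.
Local Open Scope classical_set_scope.

(* f' is the derivative of f on the set I, the difference quotient being
   taken within I (one-sided at endpoints of an interval). *)
Definition deriv_on {R : realType} (I : set R) (f f' : R -> R) : Prop :=
  forall t, I t ->
    (fun h : R => h^-1 * (f (t + h) - f t)) @ within [set h | I (t + h)] (0 : R)^'
      --> f' t.

Definition C1_on {R : realType} (I : set R) (f : R -> R) : Prop :=
  exists f', deriv_on I f f' /\ {within I, continuous f'}.

Definition C1 {R : realType} {V : normedModType R} (f : V -> R) : Prop :=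
  (forall p, differentiable f p) /\ (forall v : V, continuous (fun p => 'd f p v)).

(* Stages are indexed by nat j = 1..S, components by nat i = 1..C.       *)

Unset Implicit Arguments.
Section Model.
Variables (R : realType) (S C : nat).

Record state := State {
  st_n : nat -> R; st_H : nat -> R; st_T : nat -> R; st_V : nat -> R;
  st_L : nat -> R; st_x : nat -> nat -> R; st_y : nat -> nat -> R }.

Variables (f_vle : nat -> R * R * 'rV[R]_C -> R)   (* f_vle,i (P, T, x) *)
          (f_hl : R * 'rV[R]_C -> R)
          (f_hv : R * 'rV[R]_C -> R)
          (f_holdup : R -> R)
          (delta : nat -> nat -> R).               (* delta j i = delta_i^j *)

Definition xvec_of (z : state) j : 'rV[R]_C := \row_(i < C) st_x z j i.+1.
Definition yvec_of (z : state) j : 'rV[R]_C := \row_(i < C) st_y z j i.+1.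

Definition dsum j : R := \sum_(1 <= i < C.+1) delta j i.

(* numerator of the right-hand side of (CM_delta) for x_i^j *)
Definition cmterm (z : state) (eps : R) j i : R :=
  let L := st_L z in let V := st_V z in let x := st_x z in let y := st_y z in
  if j == 1%N then
    L 1%N * (x 2%N i - x 1%N i - delta 1%N i) - V 1%N * (y 1%N i - x 1%N i - delta 1%N i)
  else if j == S then
    eps * V S * (x S i + delta S i - y S i) + V S.-1 * (y S.-1 i - x S i - delta S i)
  else
    L j * (x j.+1 i - x j i - delta j i) - V j * (y j i - x j i - delta j i)
    + V j.-1 * (y j.-1 i - x j i - delta j i).

(* right-hand sides of (TM), (CM_delta), (EB) *)
Definition rhs_n (z : state) (eps : R) j : R :=
  let L := st_L z in let V := st_V z in
  if j == 1%N then L 1%N - V 1%N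
  else if j == S then - eps * V S - L S.-1 + V S.-1
  else L j - V j - L j.-1 + V j.-1.

Definition rhs_x (z : state) (eps : R) j i : R := cmterm z eps j i / st_n z j.

Definition rhs_H (z : state) (eps Q Tcond : R) j : R :=
  let L := st_L z in let V := st_V z in let T := st_T z in
  if j == 1%N then
    L 1%N * f_hl (T 2%N, xvec_of z 2%N) - V 1%N * f_hv (T 1%N, yvec_of z 1%N) + Q
  else if j == S then
    (1 - eps) * V S * f_hl (Tcond, yvec_of z S) - V S * f_hv (T S, yvec_of z S)
    - L S.-1 * f_hl (T S, xvec_of z S) + V S.-1 * f_hv (T S.-1, yvec_of z S.-1)
  else
    L j * f_hl (T j.+1, xvec_of z j.+1) - V j * f_hv (T j, yvec_of z j)
    - L j.-1 * f_hl (T j, xvec_of z j) + V j.-1 * f_hv (T j.-1, yvec_of z j.-1).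

(* components of the algebraic equations g_delta *)
Definition aux (z : state) (eps : R) j : R :=
  (\sum_(1 <= i < C.+1) cmterm z eps j i) / st_n z j.
Definition ydef (z : state) (P : R) j i : R :=
  st_y z j i - f_vle i (P, st_T z j, xvec_of z j).
Definition edef (z : state) j : R := st_H z j - st_n z j * f_hl (st_T z j, xvec_of z j).
Definition xsum (z : state) j : R := st_x z j C - 1 + \sum_(1 <= i < C) st_x z j i.
Definition hold (z : state) j : R := st_n z j - f_holdup (st_L z j.-1).

(* Index type shared by the components of g_delta and of eta:
     inl(inl(inl(inl j)))      : aux^(j+1)          <-> V^(j+1)
     inl(inl(inl(inr (j,i))))  : ydef^(j+1)_(i+1)   <-> y^(j+1)_(i+1)
     inl(inl(inr j))           : edef^(j+1)         <-> T^(j+1)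
     inl(inr j)                : xsum^(j+1)         <-> x_C^(j+1)
     inr k                     : hold^(k+2)         <-> L^(k+1)            *)
Definition Idx := ('I_S + 'I_S * 'I_C + 'I_S + 'I_S + 'I_S.-1)%type.

Definition gcomp (eps P : R) (r : Idx) (z : state) : R :=
  match r with
  | inl (inl (inl (inl j))) => aux z eps j.+1
  | inl (inl (inl (inr (j, i)))) => ydef z P j.+1 i.+1
  | inl (inl (inr j)) => edef z j.+1
  | inl (inr j) => xsum z j.+1
  | inr k => hold z k.+2
  end.

Definition upd (f : nat -> R) j (s : R) : nat -> R :=
  fun k => if k == j then f k + s else f k.
Definition upd2 (f : nat -> nat -> R) j i (s : R) : nat -> nat -> R :=
  fun k l => if (k == j) && (l == i) then f k l + s else f k l.

(* move the algebraic (eta) coordinate c by s, xi held fixed *)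
Definition bump (c : Idx) (s : R) (z : state) : state :=
  let: State n H T V L x y := z in
  match c with
  | inl (inl (inl (inl j))) => State n H T (upd V j.+1 s) L x y
  | inl (inl (inl (inr (j, i)))) => State n H T V L x (upd2 y j.+1 i.+1 s)
  | inl (inl (inr j)) => State n H (upd T j.+1 s) V L x y
  | inl (inr j) => State n H T V L (upd2 x j.+1 C s) y
  | inr k => State n H T V (upd L k.+1 s) x y
  end.

Definition jac_eta (eps P : R) (z : state) : 'M[R]_#|{: Idx}| :=
  \matrix_(r, c)
    (fun s : R => gcomp eps P (enum_val r) (bump (enum_val c) s z))^`() 0.

End Model.
Arguments State {R}.
Arguments st_n {R}.
Arguments st_H {R}.
Arguments st_T {R}.
Arguments st_V {R}.
Arguments st_L {R}.
Arguments st_x {R}.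
Arguments st_y {R}.
Arguments xvec_of {R}.
Arguments yvec_of {R}.
Arguments dsum {R}.
Arguments cmterm {R}.
Arguments rhs_n {R}.
Arguments rhs_x {R}.
Arguments rhs_H {R}.
Arguments aux {R}.
Arguments ydef {R}.
Arguments edef {R}.
Arguments xsum {R}.
Arguments hold {R}.
Arguments gcomp {R}.
Arguments upd {R}.
Arguments upd2 {R}.
Arguments bump {R}.
Arguments jac_eta {R}.
Set Implicit Arguments.

(* Main.v *)
Require Import Defs.
From HB Require Import structures.
From mathcomp Require Import all_boot all_order all_algebra.
From mathcomp Require Import all_classical all_reals all_analysis.
From mathcomp Require Import ring lra.
Import Order.TTheory GRing.Theory Num.Theory.
Import numFieldNormedType.Exports.
Local Open Scope ring_scope.
Local Open Scope classical_set_scope.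

Section F.
Variables (R : realType) (S C : nat) (delta : nat -> nat -> R).

Local Notation sm f := (\sum_(1 <= i < C.+1) f i).

Lemma pl_sum3 (p q d : nat -> R) :
  \sum_(1 <= i < C.+1) (p i - q i - d i) = sm p - sm q - sm d.
Proof. by rewrite !sumrB. Qed.

Lemma pl_sum3' (p q d : nat -> R) :
  \sum_(1 <= i < C.+1) (p i + d i - q i) = sm p + sm d - sm q.
Proof. by rewrite sumrB big_split. Qed.

Lemma pl_cm1 (a b : R) (p q d r : nat -> R) :
  \sum_(1 <= i < C.+1) (a * (p i - q i - d i) - b * (r i - q i - d i)) =
  a * (sm p - sm q - sm d) - b * (sm r - sm q - sm d).
Proof. by rewrite sumrB -!mulr_sumr !pl_sum3. Qed.

Lemma pl_cmm (a b c : R) (p q d r u : nat -> R) :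
  \sum_(1 <= i < C.+1) (a * (p i - q i - d i) - b * (r i - q i - d i) + c * (u i - q i - d i)) =
  a * (sm p - sm q - sm d) - b * (sm r - sm q - sm d) + c * (sm u - sm q - sm d).
Proof. by rewrite big_split /= pl_cm1 -mulr_sumr pl_sum3. Qed.

Lemma pl_cmS (a c : R) (q d r u : nat -> R) :
  \sum_(1 <= i < C.+1) (a * (q i + d i - r i) + c * (u i - q i - d i)) =
  a * (sm q + sm d - sm r) + c * (sm u - sm q - sm d).
Proof. by rewrite big_split /= -!mulr_sumr pl_sum3 pl_sum3'. Qed.

Definition Ys (z : state R) j := \sum_(1 <= i < C.+1) st_y z j i.
Definition Dl j := dsum C delta j.

Lemma pl_formulas (z : state R) (e : R) :
  (2 <= S)%N ->
  (forall j, (1 <= j <= S)%N -> \sum_(1 <= i < C.+1) st_x z j i = 1) ->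
  (forall j, (1 <= j <= S)%N -> \sum_(1 <= i < C.+1) cmterm S delta z e j i = 0) ->
  (forall j, (1 <= j < S)%N -> st_V z j * (Ys z j - 1 - Dl j) =
     - (\sum_(1 <= k < j.+1) st_L z k * Dl k - \sum_(1 <= k < j) st_V z k * (Dl k - Dl k.+1)))
  /\ e * st_V z S * (Ys z S - 1 - Dl S) =
     - (\sum_(1 <= k < S) st_L z k * Dl k - \sum_(1 <= k < S) st_V z k * (Dl k - Dl k.+1)).
Proof.
move=> S2 hx hc.
have S1 : (S == 1)%N = false by case: S S2 => [|[]].
have hS : (1 <= S)%N by exact: ltnW.
have c1 : st_V z 1 * (Ys z 1 - 1 - Dl 1) = - (st_L z 1 * Dl 1).
  have h := hc 1%N hS; rewrite /cmterm /= pl_cm1 in h.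
  rewrite (hx 2%N) ?S2 // (hx 1%N) ?hS // /Dl /dsum in h.
  rewrite /Ys /Dl /dsum; lra.
have cmid : forall j, (0 < j)%N -> (j.+1 < S)%N -> st_V z j.+1 * (Ys z j.+1 - 1 - Dl j.+1) =
     st_V z j * (Ys z j - 1 - Dl j) - st_L z j.+1 * Dl j.+1 + st_V z j * (Dl j - Dl j.+1).
  move=> j j1 jS.
  have jr : (0 < j.+1 <= S)%N by rewrite /= (ltnW jS).
  have h := hc j.+1 jr; rewrite /cmterm in h.
  have e1 : (j.+1 == 1)%N = false by apply/negbTE; rewrite eqSS -lt0n.
  have e2 : (j.+1 == S) = false by apply/negbTE; rewrite neq_ltn jS.
  rewrite e1 e2 pl_cmm /= in h.
  rewrite (hx j.+2) ?jS // (hx j.+1) // in h.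
  rewrite /Ys /Dl /dsum; lra.
have ind : forall m, (0 < m < S)%N -> st_V z m * (Ys z m - 1 - Dl m) =
     - (\sum_(1 <= k < m.+1) st_L z k * Dl k - \sum_(1 <= k < m) st_V z k * (Dl k - Dl k.+1)).
  elim=> [//|m IH] /andP [_ mS].
  case: m IH mS => [|m] IH mS.
    rewrite big_nat1 big_geq //; lra.
  have h1 := cmid m.+1 isT mS.
  have h2 := IH (ltnW mS).
  rewrite [\sum_(1 <= k < m.+3) _]big_nat_recr //= [\sum_(1 <= k < m.+2) (st_V z k * _)]big_nat_recr //=; lra.
split; first by move=> j /andP[j1 jS]; apply: ind; rewrite j1.
have hSr : (0 < S <= S)%N by rewrite hS leqnn.
have h := hc S hSr.
rewrite /cmterm S1 eqxx pl_cmS (hx S hSr) in h.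
have S1p : (0 < S.-1)%N by rewrite -ltnS prednK.
have hS1r : (0 < S.-1 < S)%N by rewrite S1p /= prednK.
have hS1 := ind S.-1 hS1r.
rewrite prednK // in hS1.
have eV : \sum_(1 <= k < S) st_V z k * (Dl k - Dl k.+1) =
   \sum_(1 <= k < S.-1) st_V z k * (Dl k - Dl k.+1) + st_V z S.-1 * (Dl S.-1 - Dl S.-1.+1).
  by rewrite -{1}(prednK hS) big_nat_recr.
rewrite prednK // in eV.
rewrite /Ys /Dl /dsum in hS1 eV *; lra.
Qed.
End F.

Section D.
Variable R : realType.
Lemma d1_affine (g : R -> R) a b : (forall s, g s = a + s * b) -> g^`() 0 = b.
Proof.
move=> h; have -> : g = (cst a + (id * cst b))%R by apply/funext => s; rewrite h.
rewrite derive1E deriveD //.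
rewrite derive_cst add0r deriveM //.
rewrite derive_cst derive_id scale0r add0r /=. exact: mulr1.
Qed.

Lemma d1_const (g : R -> R) : (forall s, g s = g 0) -> g^`() 0 = 0.
Proof.
move=> h; have -> : g = cst (g 0) by apply/funext => s; rewrite h.
exact: derive1_cst.
Qed.

Lemma pl_derivable_shift (f : R -> R) a : derivable f a 1 -> derivable (fun s => f (s + a)) 0 1.
Proof.
rewrite /derivable /=.
have -> : (fun h : R => h^-1 *: (f (h *: 1 + 0 + a) - f (0 + a))) =
   (fun h : R => h^-1 *: (f (h *: 1 + a) - f a)).
  by apply/funext => h; rewrite !add0r addr0.
by [].
Qed.

Lemma pl_derive1_shift (f : R -> R) a : (fun s => f (s + a))^`() 0 = f^`() a.
Proof.
rewrite /derive1 /=.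
have -> : (fun h : R => h^-1 *: (f (h + 0 + a) - f (0 + a))) =
   (fun h : R => h^-1 *: (f (h + a) - f a)).
  by apply/funext => h; rewrite !add0r addr0.
by [].
Qed.

Lemma d1_shift (f : R -> R) a c b :
  derivable f a 1 ->
  (fun s => c + b * f (a + s))^`() 0 = b * derive1 f a.
Proof.
move=> /pl_derivable_shift df.
have -> : (fun s => c + b * f (a + s)) = (cst c + (cst b * (fun s => f (s + a))))%R.
  by apply/funext => s; rewrite (addrC a s).
rewrite derive1E deriveD //; last by apply: derivableM.
rewrite derive_cst add0r deriveM //.
by rewrite derive_cst scaler0 addr0 -derive1E pl_derive1_shift.
Qed.
Lemma pl_part_derivable (C : nat) (f : R * 'rV[R]_C -> R) (xv : 'rV[R]_C) T :
  C1 f -> derivable (fun s : R => f (s, xv)) T 1.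
Proof.
move=> [df _]; apply: diff_derivable.
have -> : (fun s : R => f (s, xv)) = f \o (fun s : R => (s, xv)) by [].
apply: differentiable_comp; last exact: df.
apply: differentiable_pair => //.
Qed.

Lemma pl_derivable1 (f : R -> R) a : C1 f -> derivable f a 1.
Proof. by move=> [df _]; apply: diff_derivable. Qed.
End D.

Lemma pl_ord_neq m (j j' : 'I_m) : j' != j -> (j'.+1 == j.+1)%N = false.
Proof. by move=> h; apply/negbTE; rewrite eqSS. Qed.

Section K.
Variables (R : realType) (S C : nat).
Definition cV (j : 'I_S) : Idx S C := inl (inl (inl (inl j))).
Definition cY (j : 'I_S) (i : 'I_C) : Idx S C := inl (inl (inl (inr (j, i)))).
Definition cT (j : 'I_S) : Idx S C := inl (inl (inr j)).
Definition cX (j : 'I_S) : Idx S C := inl (inr j).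
Definition cL (k : 'I_S.-1) : Idx S C := inr k.
Lemma pl_single (D : Idx S C -> Idx S C -> R) (w : Idx S C -> R) r c0 :
  (forall c, c != c0 -> w c * D r c = 0) -> \sum_c w c * D r c = w c0 * D r c0.
Proof. by move=> h; rewrite (bigD1 c0) //= big1 ?addr0. Qed.

Lemma pl_kernel (D : Idx S C -> Idx S C -> R) (w : Idx S C -> R) :
  (forall r, \sum_c w c * D r c = 0) ->
  (forall j c, c != cX j -> D (cX j) c = 0) -> (forall j, D (cX j) (cX j) != 0) ->
  (forall j c, c != cT j -> c != cX j -> D (cT j) c = 0) -> (forall j, D (cT j) (cT j) != 0) ->
  (forall j i c, c != cY j i -> c != cT j -> c != cX j -> D (cY j i) c = 0) ->
  (forall j i, D (cY j i) (cY j i) != 0) ->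
  (forall k c, c != cL k -> D (cL k) c = 0) -> (forall k, D (cL k) (cL k) != 0) ->
  (forall (j j' : 'I_S), j' != j -> (j'.+1 != j)%N -> D (cV j) (cV j') = 0) ->
  (forall j, D (cV j) (cV j) != 0) ->
  forall c, w c = 0.
Proof.
move=> hs hX dX hT dT hY dY hL dL hV dV.
have key : forall r c0, (forall c, c != c0 -> w c * D r c = 0) -> D r c0 != 0 -> w c0 = 0.
  move=> r c0 h d; have := hs r; rewrite (pl_single _ _ _ _ h) => /eqP.
  by rewrite mulf_eq0 (negbTE d) orbF => /eqP.
have wX : forall j, w (cX j) = 0.
  by move=> j; apply: (key (cX j)) => // c /hX ->; rewrite mulr0.
have wT : forall j, w (cT j) = 0.
  move=> j; apply: (key (cT j)) => // c nc.
  by case: (eqVneq c (cX j)) => [->|nx]; [rewrite wX mul0r | rewrite hT // mulr0].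
have wY : forall j i, w (cY j i) = 0.
  move=> j i; apply: (key (cY j i)) => // c nc.
  case: (eqVneq c (cX j)) => [->|nx]; first by rewrite wX mul0r.
  case: (eqVneq c (cT j)) => [->|nt]; first by rewrite wT mul0r.
  by rewrite hY // mulr0.
have wL : forall k, w (cL k) = 0.
  by move=> k; apply: (key (cL k)) => // c /hL ->; rewrite mulr0.
have wV : forall j : 'I_S, w (cV j) = 0.
  suff: forall m (j : 'I_S), (j < m)%N -> w (cV j) = 0 by move=> h j; exact: (h j.+1 j (ltnSn _)).
  elim=> [//|m IH] j jm; apply: (key (cV j)) => // c.
  case: c => [[[[j'|[j' i']]|j']|j']|k'] nc.
  - have nj : j' != j by apply: contraNneq nc => ->.
    case: (eqVneq (j'.+1) (nat_of_ord j)) => [e|ne].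
      by rewrite (IH j') ?mul0r // -ltnS e.
    by rewrite (hV j j') // mulr0.
  - by rewrite (wY j' i') mul0r.
  - by rewrite (wT j') mul0r.
  - by rewrite (wX j') mul0r.
  - by rewrite (wL k') mul0r.
by case=> [[[[j|[j i]]|j]|j]|k]; [apply: wV | apply: wY | apply: wT | apply: wX | apply: wL].
Qed.

Variables (f_vle : nat -> R * R * 'rV[R]_C -> R) (f_hl : R * 'rV[R]_C -> R)
  (f_holdup : R -> R) (delta : nat -> nat -> R) (e p : R).

Local Notation G := (gcomp S C f_vle f_hl f_holdup delta e p).
Local Notation B := (Defs.bump S C).


Lemma inv_X z j c s : c != cX j -> G (cX j) (B c s z) = G (cX j) z.
Proof.
case: z => n H T V L x y.
case: c => [[[[j'|[j' i']]|j']|j']|k'] nc //=.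
have nj : j != j' by apply: contraNneq nc => ->.
by rewrite /xsum /upd2 /= (pl_ord_neq _ _ _ nj).
Qed.

Lemma inv_T z j c s : c != cT j -> c != cX j -> G (cT j) (B c s z) = G (cT j) z.
Proof.
case: z => n H T V L x y.
case: c => [[[[j'|[j' i']]|j']|j']|k'] nc nx //=.
  have nj : j != j' by apply: contraNneq nc => ->.
  by rewrite /edef /upd /= (pl_ord_neq _ _ _ nj).
have nj : j != j' by apply: contraNneq nx => ->.
by rewrite /edef /upd2 /xvec_of /= (pl_ord_neq _ _ _ nj).
Qed.

Lemma inv_Y z j i c s : c != cY j i -> c != cT j -> c != cX j -> G (cY j i) (B c s z) = G (cY j i) z.
Proof.
case: z => n H T V L x y.
case: c => [[[[j'|[j' i']]|j']|j']|k'] nc nt nx //=.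
- rewrite /ydef /upd2 /=.
  case: (eqVneq j j') => [ej|nj]; last by rewrite (pl_ord_neq _ _ _ nj).
  subst j'; have ni : i != i' by apply: contraNneq nc => ->.
  by rewrite eqxx /= (pl_ord_neq _ _ _ ni).
- have nj : j != j' by apply: contraNneq nt => ->.
  by rewrite /ydef /upd /= (pl_ord_neq _ _ _ nj).
- have nj : j != j' by apply: contraNneq nx => ->.
  by rewrite /ydef /upd2 /xvec_of /= (pl_ord_neq _ _ _ nj).
Qed.

Lemma inv_L z k c s : c != cL k -> G (cL k) (B c s z) = G (cL k) z.
Proof.
case: z => n H T V L x y.
case: c => [[[[j'|[j' i']]|j']|j']|k'] nc //=.
have nk : k != k' by apply: contraNneq nc => ->.
by rewrite /hold /upd /= (pl_ord_neq _ _ _ nk).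
Qed.


Lemma pl_cmterm_V n H T V1 V2 L x y m i : V1 m = V2 m -> V1 m.-1 = V2 m.-1 ->
  cmterm S delta (State n H T V1 L x y) e m i = cmterm S delta (State n H T V2 L x y) e m i.
Proof.
move=> h1 h2; rewrite /cmterm /=.
case: ifP => [/eqP e1|_]; first by subst m; rewrite h1.
case: ifP => [/eqP e2|_]; first by subst m; rewrite h1 h2.
by rewrite h1 h2.
Qed.

Lemma inv_V z (j j' : 'I_S) s : j' != j -> (j'.+1 != j)%N -> G (cV j) (B (cV j') s z) = G (cV j) z.
Proof.
case: z => n H T V L x y nj nj1 /=.
rewrite /aux /=; congr (_ / _); apply: eq_big_nat => i _; apply: pl_cmterm_V.
  by rewrite eq_sym in nj; rewrite /upd (pl_ord_neq _ _ _ nj).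
by rewrite /upd /= eq_sym (negbTE nj1).
Qed.

Definition Dm z r c := derive1 (fun s => G r (B c s z)) 0.

Lemma diag_X z j : Dm z (cX j) (cX j) = 1.
Proof.
case: z => n H T V L x y.
apply: (d1_affine _ _ (xsum C (State n H T V L x y) j.+1)) => s.
rewrite /= /xsum /upd2 /= eqxx /=.
rewrite (eq_big_nat _ _ (F2 := fun i => x j.+1 i)); last first.
  by move=> i /andP [_ iC]; rewrite ltn_eqF.
rewrite eqxx; lra.
Qed.

Lemma diag_Y z j i : Dm z (cY j i) (cY j i) = 1.
Proof.
case: z => n H T V L x y.
apply: (d1_affine _ _ (ydef C f_vle (State n H T V L x y) p j.+1 i.+1)) => s.
rewrite /= /ydef /upd2 /= !eqxx /=; lra.
Qed.


Lemma diag_T z j : C1 f_hl -> Dm z (cT j) (cT j) =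
  - st_n z j.+1 * derive1 (fun s => f_hl (s, xvec_of C z j.+1)) (st_T z j.+1).
Proof.
move=> hf; case: z => n H T V L x y.
rewrite /Dm /= -(d1_shift _ _ _ (H j.+1)); last exact: pl_part_derivable.
congr derive1; apply/funext => s.
by rewrite /edef /upd /= eqxx mulNr.
Qed.

Lemma diag_L z k : C1 f_holdup -> Dm z (cL k) (cL k) =
  - 1 * derive1 f_holdup (st_L z k.+1).
Proof.
move=> hf; case: z => n H T V L x y.
rewrite /Dm /= -(d1_shift _ _ _ (n k.+2)); last exact: pl_derivable1.
congr derive1; apply/funext => s.
by rewrite /hold /upd /= eqxx mulN1r.
Qed.

Definition coefV (z : state R) m i :=
  if m == 1%N then - (st_y z m i - st_x z m i - delta m i)
  else if m == S then e * (st_x z m i + delta m i - st_y z m i)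
  else - (st_y z m i - st_x z m i - delta m i).

Lemma cm_bumpV n H T V L x y m i s : (0 < m)%N ->
  cmterm S delta (State n H T (upd V m s) L x y) e m i =
  cmterm S delta (State n H T V L x y) e m i + s * coefV (State n H T V L x y) m i.
Proof.
move=> m0; rewrite /cmterm /coefV /upd /=.
case: ifP => [/eqP e1|_]; first by subst m; rewrite /=; ring.
have em : (m.-1 == m) = false by case: m m0 => // m _; apply: ltn_eqF.
case: ifP => [/eqP e2|_]; first by subst m; rewrite eqxx em; ring.
by rewrite eqxx em; ring.
Qed.

Lemma diag_V z j : Dm z (cV j) (cV j) =
  (\sum_(1 <= i < C.+1) coefV z j.+1 i) / st_n z j.+1.
Proof.
case: z => n H T V L x y.
apply: (d1_affine _ _ (aux S C delta (State n H T V L x y) e j.+1)) => s.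
rewrite /= /aux /=.
rewrite (eq_big_nat _ _ (F2 := fun i => cmterm S delta (State n H T V L x y) e j.+1 i + s * coefV (State n H T V L x y) j.+1 i)); last by move=> i _; rewrite cm_bumpV.
rewrite big_split /= -mulr_sumr; ring.
Qed.



Lemma sum_coefV z m : \sum_(1 <= i < C.+1) coefV z m i =
  if m == 1%N then - (\sum_(1 <= i < C.+1) st_y z m i - \sum_(1 <= i < C.+1) st_x z m i - \sum_(1 <= i < C.+1) delta m i)
  else if m == S then e * (\sum_(1 <= i < C.+1) st_x z m i + \sum_(1 <= i < C.+1) delta m i - \sum_(1 <= i < C.+1) st_y z m i)
  else - (\sum_(1 <= i < C.+1) st_y z m i - \sum_(1 <= i < C.+1) st_x z m i - \sum_(1 <= i < C.+1) delta m i).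
Proof.
rewrite /coefV; case: (m == 1%N); last case: (m == S).
- by rewrite sumrN !sumrB.
- by rewrite -mulr_sumr sumrB big_split.
- by rewrite sumrN !sumrB.
Qed.

Lemma pl_solve (v Y D X : R) : v != 0 -> v * (Y - 1 - D) = - X -> Y = 1 + D - v^-1 * X.
Proof. by move=> hv h; rewrite -[X]opprK -h mulrN opprK mulrA mulVf // mul1r; ring. Qed.

End K.

Theorem mainTheorem6 (R : realType) (S C : nat) (I : interval R)
  (f_vle : nat -> R * R * 'rV[R]_C -> R) (f_hl : R * 'rV[R]_C -> R)
  (f_hv : R * 'rV[R]_C -> R) (f_holdup : R -> R)
  (eps P Q Tcond : R -> R)
  (delta : nat -> nat -> R)
  (n H T V L : nat -> R -> R) (x y : nat -> nat -> R -> R) :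
  (2 <= S)%N -> (2 <= C)%N ->
  (* smoothness of the given functions and of the controls *)
  (forall i, (1 <= i <= C)%N -> C1 (f_vle i)) -> C1 f_hl -> C1 f_hv -> C1 f_holdup ->
  C1_on [set` I] eps -> C1_on [set` I] P -> C1_on [set` I] Q -> C1_on [set` I] Tcond ->
  (* perturbation parameters *)
  (forall j i, (1 <= j <= S)%N -> (1 <= i <= C)%N -> 0 <= delta j i) ->
  0 < dsum C delta 1 ->
  (forall j, (1 <= j < S)%N -> dsum C delta j <= dsum C delta j.+1) ->
  let Z := fun t => State (fun j => n j t) (fun j => H j t) (fun j => T j t)
                          (fun j => V j t) (fun j => L j t)
                          (fun j i => x j i t) (fun j i => y j i t) in
  (* (xi, eta) is a solution of (P_delta) on I *)
  (forall j, (1 <= j <= S)%N ->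
     [/\ C1_on [set` I] (n j), C1_on [set` I] (H j), C1_on [set` I] (T j)
       & C1_on [set` I] (V j)]) ->
  (forall j, (1 <= j < S)%N -> C1_on [set` I] (L j)) ->
  (forall j i, (1 <= j <= S)%N -> (1 <= i <= C)%N ->
     C1_on [set` I] (x j i) /\ C1_on [set` I] (y j i)) ->
  (forall j, (1 <= j <= S)%N ->
     deriv_on [set` I] (n j) (fun t => rhs_n S (Z t) (eps t) j)) ->
  (forall j i, (1 <= j <= S)%N -> (1 <= i < C)%N ->
     deriv_on [set` I] (x j i) (fun t => rhs_x S delta (Z t) (eps t) j i)) ->
  (forall j, (1 <= j <= S)%N ->
     deriv_on [set` I] (H j) (fun t => rhs_H S C f_hl f_hv (Z t) (eps t) (Q t) (Tcond t) j)) ->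
  (forall t, t \in I -> forall r : Idx S C,
     gcomp S C f_vle f_hl f_holdup delta (eps t) (P t) r (Z t) = 0) ->
  (* non-degeneracy assumptions along the solution *)
  (forall t, t \in I ->
     [/\ eps t != 0,
         (forall j, (1 <= j <= S)%N -> n j t != 0 /\ 0 < V j t),
         (forall j, (1 <= j < S)%N -> 0 < L j t /\ f_holdup^`() (L j t) != 0)
       & (forall j, (1 <= j <= S)%N ->
            (fun s : R => f_hl (s, xvec_of C (Z t) j))^`() (T j t) != 0)]) ->
  forall t, t \in I ->
    [/\ \det (jac_eta S C f_vle f_hl f_holdup delta (eps t) (P t) (Z t)) != 0,
        (forall j, (1 <= j < S)%N ->
           \sum_(1 <= i < C.+1) y j i t =
             1 + dsum C delta j
             - (V j t)^-1 * (\sum_(1 <= k < j.+1) L k t * dsum C delta k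
                             - \sum_(1 <= k < j) V k t * (dsum C delta k - dsum C delta k.+1)))
      & \sum_(1 <= i < C.+1) y S i t =
          1 + dsum C delta S
          - (eps t * V S t)^-1 * (\sum_(1 <= k < S) L k t * dsum C delta k
                                  - \sum_(1 <= k < S) V k t * (dsum C delta k - dsum C delta k.+1))].
Proof.
move=> S2 C2 hvle hhl hhv hho heps hP hQ hTc hdel hd1 hdmon Z hC1 hC1L hC1x hdn hdx hdH hg hnd t tI.
set z := Z t.
have [e0 hnV hLd hTd] := hnd t tI.
have hg0 := hg t tI.
have S0 : (0 < S)%N := ltnW S2.
have stage : forall (Pr : nat -> Prop), (forall jo : 'I_S, Pr jo.+1) -> forall j, (0 < j <= S)%N -> Pr j.
  move=> Pr h j /andP [j1 jS]; have jo : (j.-1 < S)%N by rewrite prednK.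
  by have := h (Ordinal jo); rewrite /= prednK.
have hx : forall j, (0 < j <= S)%N -> \sum_(1 <= i < C.+1) st_x z j i = 1.
  apply: stage => jo; have := hg0 (inl (inr jo)); rewrite /= /xsum.
  rewrite big_nat_recr /=; [lra | exact: ltnW].
have hc : forall j, (0 < j <= S)%N -> \sum_(1 <= i < C.+1) cmterm S delta z (eps t) j i = 0.
  apply: stage => jo; have := hg0 (inl (inl (inl (inl jo)))); rewrite /= /aux.
  move/eqP; rewrite mulf_eq0 invr_eq0 => /orP [/eqP // | hn0].
  exfalso; move: hn0; apply/negP; exact: (hnV jo.+1 (ltn_ord jo)).1.
have [hf1 hfS] := @pl_formulas _ S C delta z (eps t) S2 hx hc.
have Vpos : forall j, (0 < j <= S)%N -> 0 < st_V z j by move=> j hj; exact: (hnV j hj).2.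
have Dpos : forall k, (0 < k <= S)%N -> 0 < @Dl _ C delta k.
  elim=> [//|k IH] /andP [_ kS].
  case: k IH kS => [|k] IH kS; first exact: hd1.
  have h1 := hdmon k.+1 kS.
  have h2 := IH (ltnW kS).
  rewrite /Dl in h2 *; lra.
have PL : forall m, (0 < m < S)%N -> 0 < \sum_(1 <= k < m.+1) st_L z k * @Dl _ C delta k.
  move=> m /andP [m0 mS]; rewrite big_nat_recl //.
  have h1 : 0 < st_L z 1 * @Dl _ C delta 1.
    by apply: mulr_gt0; [exact: (hLd 1%N S2).1 | exact: hd1].
  have h2 : 0 <= \sum_(1 <= i < m) st_L z i.+1 * @Dl _ C delta i.+1.
    rewrite big_seq; apply: sumr_ge0 => k; rewrite mem_index_iota => /andP [k1 km].
    have kS : (k.+1 < S)%N by apply: leq_ltn_trans mS.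
    apply: ltW; apply: mulr_gt0; first exact: (hLd k.+1 kS).1.
    by apply: Dpos; rewrite /= ltnW.
  lra.
have PV : forall q, (q <= S)%N -> \sum_(1 <= k < q) st_V z k * (@Dl _ C delta k - @Dl _ C delta k.+1) <= 0.
  move=> q qS; rewrite big_seq; apply: sumr_le0 => k; rewrite mem_index_iota => /andP [k1 kq].
  have kS : (k < S)%N by apply: leq_trans qS.
  rewrite pmulr_rle0; last by apply: Vpos; rewrite k1 ltnW.
  by rewrite subr_le0; apply: hdmon; rewrite k1.
have hYn : forall m, (0 < m < S)%N -> @Ys _ C z m - 1 - @Dl _ C delta m != 0.
  move=> m hm; apply/eqP => h0; have := hf1 m hm; rewrite h0 mulr0.
  have := PL m hm; have := PV m (ltnW (andP hm).2); lra.
have hYS : eps t * st_V z S * (@Ys _ C z S - 1 - @Dl _ C delta S) != 0.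
  rewrite hfS oppr_eq0; apply/eqP => h0.
  have a1 : (0 < S.-1)%N by rewrite -ltnS prednK.
  have a2 : (S.-1 < S)%N by rewrite ltn_predL.
  have := PL S.-1 (introT andP (conj a1 a2)); rewrite prednK //.
  have := PV S (leqnn _); lra.
have VSne : eps t * V S t != 0.
  by apply: mulf_neq0 => //; apply: lt0r_neq0; apply: Vpos; rewrite S0 leqnn.
split; last first.
- apply: pl_solve => //; rewrite /Ys /Dl in hfS; exact: hfS.
- move=> j hj; apply: pl_solve; first by apply: lt0r_neq0; apply: Vpos; rewrite (andP hj).1 ltnW // (andP hj).2.
  have := hf1 j hj; rewrite /Ys /Dl; exact.
rewrite -det_tr; apply/negP => /det0P [v vn0 hv].
pose w := fun c : Idx S C => v 0 (enum_rank c).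
have hw : forall c, w c = 0.
  apply: (@pl_kernel R S C (@Dm R S C f_vle f_hl f_holdup delta (eps t) (P t) z) w).
  - move=> r; move/rowP: hv => hv; have := hv (enum_rank r); rewrite !mxE => h.
    rewrite -[RHS]h (reindex _ (onW_bij _ (enum_rank_bij _))) /=.
    apply: eq_bigr => c _; rewrite /w !mxE !enum_rankK; reflexivity.
  - move=> j c nc; rewrite /Dm; apply: d1_const => s; rewrite !inv_X //.
  - by move=> j; rewrite diag_X oner_neq0.
  - move=> j c n1 n2; rewrite /Dm; apply: d1_const => s; rewrite !inv_T //.
  - move=> j; rewrite diag_T //; apply: mulf_neq0.
      by rewrite oppr_eq0; exact: (hnV j.+1 (ltn_ord j)).1.
    exact: (hTd j.+1 (ltn_ord j)).
  - move=> j i c n1 n2 n3; rewrite /Dm; apply: d1_const => s; rewrite !inv_Y //.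
  - by move=> j i; rewrite diag_Y oner_neq0.
  - move=> k c nc; rewrite /Dm; apply: d1_const => s; rewrite !inv_L //.
  - move=> k; have kS : (0 < k.+1 < S)%N by rewrite /= -ltn_predRL.
    rewrite diag_L //; apply: mulf_neq0; first by rewrite oppr_eq0 oner_neq0.
    exact: (hLd k.+1 kS).2.
  - move=> j j' n1 n2; rewrite /Dm; apply: d1_const => s; rewrite !inv_V //.
  - move=> j; rewrite diag_V; apply: mulf_neq0; last first.
      by rewrite invr_eq0; exact: (hnV j.+1 (ltn_ord j)).1.
    rewrite sum_coefV; case: (eqVneq (j.+1) S) => [eS | nS].
      have e1 : (j.+1 == 1)%N = false by rewrite eS (gtn_eqF S2).
      rewrite e1 eS (hx S) ?S0 ?leqnn //.
      apply: contraNneq hYS => h0; rewrite /Ys /Dl /dsum.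
      set Sy := \sum_(1 <= i < C.+1) st_y z S i.
      set Sd := \sum_(1 <= i < C.+1) delta S i.
      have -> : eps t * st_V z S * (Sy - 1 - Sd) = - st_V z S * (eps t * (1 + Sd - Sy)) by ring.
      by rewrite h0 mulr0.
    have hm : (0 < j.+1 < S)%N by rewrite /= ltn_neqAle nS (ltn_ord j).
    have := hYn j.+1 hm; rewrite /Ys /Dl /dsum => hh.
    have hh2 : - (\sum_(1 <= i < C.+1) st_y z j.+1 i - \sum_(1 <= i < C.+1) st_x z j.+1 i
                 - \sum_(1 <= i < C.+1) delta j.+1 i) != 0.
      by rewrite oppr_eq0 (hx j.+1) // (ltn_ord j).
    by case: ifP.
move/eqP: vn0; apply; apply/rowP => i; rewrite mxE.
by have := hw (enum_val i); rewrite /w enum_valK.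
Qed.
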